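(* Define $F:\mathbb{R}^2\to\mathbb{R}$ by $$F(x)=\begin{cases}\exp\!\left(\frac{1}{\|x\|_2^2-1}\right) & \|x\|_2<1\\ 0 & \|x\|_2=1\\ -\exp\!\left(\frac{-1}{\|x\|_2^2-1}\right)\left[\sin\!\left(\frac{1}{\|x\|_2-1}\right)\frac{x^{(1)}}{\|x\|_2}-\cos\!\left(\frac{1}{\|x\|_2-1}\right)\frac{x^{(2)}}{\|x\|_2}\right] & \|x\|_2>1,\end{cases}$$ where $x^{(1)},x^{(2)}$ are the components of $x$. Then $F$ is bounded from below, is differentiable at every point of $\mathbb{R}^2$, and its gradient is locally Lipschitz continuous on $\mathbb{R}^2$. *)

(* Defs.v *)
From Stdlib Require Import Reals.
From Coquelicot Require Import Coquelicot.
Open Scope R_scope.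

Definition norm2 (x : R * R) : R := sqrt (fst x ^ 2 + snd x ^ 2).

Definition dist2 (x y : R * R) : R := norm2 (fst x - fst y, snd x - snd y).

Definition F (x : R * R) : R :=
  let r := norm2 x in
  match Rlt_dec r 1 with
  | left _ => exp (1 / (r ^ 2 - 1))
  | right _ =>
      match Rlt_dec 1 r with
      | left _ =>
          - exp (-1 / (r ^ 2 - 1)) *
            (sin (1 / (r - 1)) * fst x / r - cos (1 / (r - 1)) * snd x / r)
      | right _ => 0
      end
  end.

Definition dotl (g : R * R) (h : R * R) : R := fst g * fst h + snd g * snd h.

Definition locally_lipschitz (g : R * R -> R * R) : Prop :=
  forall x : R * R, exists r : R, 0 < r /\ exists L : R,
    forall y z : R * R, dist2 y x < r -> dist2 z x < r ->
      dist2 (g y) (g z) <= L * dist2 y z.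

(* Main.v *)
Require Import Defs.
From Stdlib Require Import Reals Lra Lia.
From Coquelicot Require Import Coquelicot.
Open Scope R_scope.

Lemma exp_INR_mult (n : nat) z : exp (INR n * z) = exp z ^ n.
Proof.
  induction n as [|n IH].
  - simpl. rewrite Rmult_0_l, exp_0; reflexivity.
  - rewrite S_INR, Rmult_plus_distr_r, exp_plus, IH, Rmult_1_l. simpl. ring.
Qed.

Lemma exp_pow_bound (n : nat) u : 0 < u -> (0 < n)%nat ->
  exp (- / u) * (/ u) ^ n <= INR n ^ n.
Proof.
  intros Hu Hn.
  assert (HnR : 0 < INR n) by (apply lt_0_INR; exact Hn).
  set (z := / u / INR n).
  assert (Hz : 0 < z) by (unfold z; apply Rdiv_lt_0_compat; [apply Rinv_0_lt_compat|]; lra).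
  assert (He : exp (/ u) = exp z ^ n).
  { rewrite <- exp_INR_mult. f_equal. unfold z. field. lra. }
  assert (Hz2 : z ^ n <= exp z ^ n).
  { apply pow_incr. split; [lra|]. pose proof (exp_ineq1_le z); lra. }
  rewrite exp_Ropp, He.
  assert (Hzn : 0 < z ^ n) by (apply pow_lt; lra).
  assert (Hezn : 0 < exp z ^ n) by (apply pow_lt, exp_pos).
  assert (Hu' : / u = z * INR n) by (unfold z; field; lra).
  rewrite Hu', Rpow_mult_distr.
  apply (Rmult_le_reg_l (exp z ^ n)); auto.
  field_simplify; [|lra].
  apply Rmult_le_compat_r; [apply pow_le; lra | exact Hz2].
Qed.

Lemma Ebound u : 0 < u < 1 ->
  exp (- / u) <= 4 * u ^ 2 /\ exp (- / u) * (/ u) ^ 4 <= 3125 * u /\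
  exp (- / u) * (/ u) ^ 4 <= 256.
Proof.
  intros Hu.
  pose proof (exp_pow_bound 2 u ltac:(lra) ltac:(lia)) as H2.
  pose proof (exp_pow_bound 4 u ltac:(lra) ltac:(lia)) as H4.
  pose proof (exp_pow_bound 5 u ltac:(lra) ltac:(lia)) as H5.
  simpl INR in *.
  pose proof (exp_pos (- / u)) as Hp.
  assert (Hi : 0 < / u) by (apply Rinv_0_lt_compat; lra).
  repeat split.
  - replace (exp (- / u)) with ((exp (- / u) * (/ u) ^ 2) * u ^ 2) by (field; lra).
    apply Rmult_le_compat_r; [apply pow_le; lra|]. lra.
  - replace (exp (- / u) * (/ u) ^ 4) with ((exp (- / u) * (/ u) ^ 5) * u) by (field; lra).
    apply Rmult_le_compat_r; lra.
  - lra.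
Qed.

Lemma deriv_flat (g : R -> R) K d : g 1 = 0 -> 0 < d -> 0 <= K ->
  (forall s, Rabs (s - 1) < d -> Rabs (g s) <= K * (s - 1) ^ 2) -> is_derive g 1 0.
Proof.
  intros Hg1 Hd HK Hb. apply is_derive_Reals. intros eps Heps.
  assert (Hde : 0 < Rmin d (eps / (K + 1))).
  { apply Rmin_glb_lt; [lra|]. apply Rdiv_lt_0_compat; lra. }
  exists (mkposreal _ Hde). intros h Hh0 Hh. simpl in Hh.
  rewrite Hg1, Rminus_0_r, Rminus_0_r.
  assert (Hh1 : Rabs h < d) by (eapply Rlt_le_trans; [exact Hh| apply Rmin_l]).
  assert (Hh2 : Rabs h < eps / (K + 1)) by (eapply Rlt_le_trans; [exact Hh| apply Rmin_r]).
  specialize (Hb (1 + h)). replace (1 + h - 1) with h in Hb by ring.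
  specialize (Hb Hh1).
  unfold Rdiv. rewrite Rabs_mult, Rabs_inv.
  assert (Ha : 0 < Rabs h) by (apply Rabs_pos_lt; exact Hh0).
  apply (Rmult_lt_reg_r (Rabs h)); [exact Ha|].
  rewrite Rmult_assoc, Rinv_l, Rmult_1_r by lra.
  eapply Rle_lt_trans; [exact Hb|].
  replace (h ^ 2) with (Rabs h * Rabs h) by (rewrite <- Rabs_mult, Rabs_right; [ring| nra]).
  assert (HK1 : K * Rabs h <= (K + 1) * Rabs h) by nra.
  assert (Hq : (K + 1) * Rabs h < eps).
  { apply (Rmult_lt_compat_l (K+1)) in Hh2; [|lra]. field_simplify in Hh2; lra. }
  nra.
Qed.

Lemma cont_flat (g : R -> R) K d : g 1 = 0 -> 0 < d -> 0 <= K ->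
  (forall s, Rabs (s - 1) < d -> Rabs (g s) <= K * Rabs (s - 1)) -> continuity_pt g 1.
Proof.
  intros Hg1 Hd HK Hb eps Heps.
  exists (Rmin d (eps / (K + 1))). split.
  { apply Rmin_glb_lt; [lra|]. apply Rdiv_lt_0_compat; lra. }
  intros s [_ Hs]. simpl in *. unfold R_dist in *. rewrite Hg1, Rminus_0_r.
  assert (Hh1 : Rabs (s - 1) < d) by (eapply Rlt_le_trans; [exact Hs| apply Rmin_l]).
  assert (Hh2 : Rabs (s-1) < eps / (K + 1)) by (eapply Rlt_le_trans; [exact Hs| apply Rmin_r]).
  specialize (Hb s Hh1).
  assert (Hq : (K + 1) * Rabs (s-1) < eps).
  { apply (Rmult_lt_compat_l (K+1)) in Hh2; [|lra]. field_simplify in Hh2; lra. }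
  pose proof (Rabs_pos (s-1)). nra.
Qed.

Lemma derive_cont (g : R -> R) x l : is_derive g x l -> continuity_pt g x.
Proof.
  intros H. apply continuity_pt_filterlim. apply (ex_derive_continuous (K:=R_AbsRing) (V:=R_NormedModule) g x). exists l; exact H.
Qed.

Lemma mvt_piece (g g1 : R -> R) a b M : a <= b ->
  (forall w, a < w < b -> is_derive g w (g1 w)) ->
  (forall w, a <= w <= b -> continuity_pt g w) ->
  (forall w, a <= w <= b -> Rabs (g1 w) <= M) ->
  Rabs (g b - g a) <= M * (b - a).
Proof.
  intros Hab Hd Hc Hb.
  destruct (MVT_gen g a b g1) as [c [Hc1 Heq]].
  - intros w Hw. rewrite Rmin_left, Rmax_right in Hw by lra. apply Hd; exact Hw.
  - intros w Hw. rewrite Rmin_left, Rmax_right in Hw by lra. apply Hc; exact Hw.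
  - rewrite Rmin_left, Rmax_right in Hc1 by lra.
    rewrite Heq, Rabs_mult, (Rabs_right (b - a)) by lra.
    apply Rmult_le_compat_r; [lra|]. apply Hb; exact Hc1.
Qed.

Lemma mvt2 (g g1 : R -> R) y z M : y <= z ->
  (forall w, y < w < z -> w <> 1 -> is_derive g w (g1 w)) ->
  (forall w, y <= w <= z -> continuity_pt g w) ->
  (forall w, y <= w <= z -> Rabs (g1 w) <= M) ->
  Rabs (g z - g y) <= M * (z - y).
Proof.
  intros Hyz Hd Hc Hb.
  destruct (Rle_dec z 1) as [Hz|Hz].
  { apply (mvt_piece g g1); auto. intros w Hw; apply Hd; lra. }
  destruct (Rle_dec 1 y) as [Hy|Hy].
  { apply (mvt_piece g g1); auto. intros w Hw; apply Hd; lra. }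
  assert (H1 : Rabs (g z - g 1) <= M * (z - 1)).
  { apply (mvt_piece g g1); try lra.
    - intros w Hw; apply Hd; lra.
    - intros w Hw; apply Hc; lra.
    - intros w Hw; apply Hb; lra. }
  assert (H2 : Rabs (g 1 - g y) <= M * (1 - y)).
  { apply (mvt_piece g g1); try lra.
    - intros w Hw; apply Hd; lra.
    - intros w Hw; apply Hc; lra.
    - intros w Hw; apply Hb; lra. }
  replace (g z - g y) with ((g z - g 1) + (g 1 - g y)) by ring.
  eapply Rle_trans; [apply Rabs_triang|]. lra.
Qed.

Definition LL1 (g : R -> R) := forall x, exists r, 0 < r /\ exists L,
  forall y z, Rabs (y - x) < r -> Rabs (z - x) < r -> Rabs (g y - g z) <= L * Rabs (y - z).

Lemma Lip_from_bound (g g1 : R -> R) x r M :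
  (forall w, Rabs (w - x) < r -> w <> 1 -> is_derive g w (g1 w)) ->
  (forall w, Rabs (w - x) < r -> continuity_pt g w) ->
  (forall w, Rabs (w - x) < r -> Rabs (g1 w) <= M) ->
  forall y z, Rabs (y - x) < r -> Rabs (z - x) < r -> Rabs (g y - g z) <= M * Rabs (y - z).
Proof.
  intros Hd Hc Hb y z Hy Hz.
  assert (Hin : forall w, Rmin y z <= w <= Rmax y z -> Rabs (w - x) < r).
  { intros w Hw. apply Rabs_lt_between' in Hy. apply Rabs_lt_between' in Hz.
    apply Rabs_lt_between'.
    pose proof (Rmin_l y z); pose proof (Rmin_r y z);
    pose proof (Rmax_l y z); pose proof (Rmax_r y z).
    destruct (Rle_dec y z).
    - rewrite Rmin_left, Rmax_right in Hw by lra. lra.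
    - rewrite Rmin_right, Rmax_left in Hw by lra. lra. }
  destruct (Rle_dec y z) as [Hyz|Hyz].
  - rewrite Rmin_left, Rmax_right in Hin by lra.
    replace (g y - g z) with (-(g z - g y)) by ring; rewrite Rabs_Ropp.
    replace (y - z) with (-(z - y)) by ring; rewrite Rabs_Ropp, (Rabs_right (z - y)) by lra.
    apply (mvt2 g g1); auto.
    + intros w Hw Hw1; apply Hd; auto; apply Hin; lra.
  - rewrite Rmin_right, Rmax_left in Hin by lra.
    rewrite (Rabs_right (y - z)) by lra.
    apply (mvt2 g g1); auto; try lra.
    + intros w Hw Hw1; apply Hd; auto; apply Hin; lra.
Qed.

Lemma Lip1D (g g1 : R -> R) M :
  (forall s, s <> 1 -> is_derive g s (g1 s)) ->
  (forall s, s <> 1 -> continuity_pt g1 s) ->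
  continuity_pt g 1 ->
  (forall s, Rabs (s - 1) < 1 -> Rabs (g1 s) <= M) -> LL1 g.
Proof.
  intros Hd Hc1 Hc Hb x.
  assert (Hcg : forall w, continuity_pt g w).
  { intros w. destruct (Req_dec w 1) as [->|Hw]; auto. eapply derive_cont; apply Hd; auto. }
  destruct (Req_dec x 1) as [->|Hx].
  - exists 1; split; [lra|]. exists M.
    apply (Lip_from_bound g g1); auto.
  - destruct (Hc1 x Hx 1 ltac:(lra)) as [al [Hal Hcl]].
    assert (Hr : 0 < Rmin al (Rabs (x - 1))).
    { apply Rmin_glb_lt; auto. apply Rabs_pos_lt. lra. }
    exists (Rmin al (Rabs (x - 1))); split; auto.
    exists (Rabs (g1 x) + 1).
    apply (Lip_from_bound g g1); auto.
    + intros w Hw.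
      destruct (Req_dec w x) as [->|Hwx]; [lra|].
      assert (H := Hcl w). simpl in H. unfold R_dist in H.
      assert (Hw' : Rabs (w - x) < al) by (eapply Rlt_le_trans; [exact Hw | apply Rmin_l]).
      specialize (H (conj (conj I (not_eq_sym Hwx)) Hw')).
      pose proof (Rabs_triang_inv (g1 w) (g1 x)). lra.
Qed.

Definition Bp S C T Th U := U^2 * S * T - /2 * C * Th^2 * T^2 - /2 * S * T^3.
Definition dBp S C T Th U :=
  -2 * U^3 * S * T - /2 * U^2 * C * Th^2 * T^2 - /2 * U^2 * S * T^3
  - /4 * S * Th^4 * T^3 + /2 * C * Th^3 * T^3 + 3/4 * C * Th^2 * T^4 + 3/4 * S * T^5.

Lemma ab_mult x y X Y : Rabs x <= X -> Rabs y <= Y -> Rabs (x * y) <= X * Y.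
Proof. intros; rewrite Rabs_mult; apply Rmult_le_compat; auto using Rabs_pos. Qed.
Lemma ab_plus x y X Y : Rabs x <= X -> Rabs y <= Y -> Rabs (x + y) <= X + Y.
Proof. intros; eapply Rle_trans; [apply Rabs_triang|lra]. Qed.
Lemma ab_minus x y X Y : Rabs x <= X -> Rabs y <= Y -> Rabs (x - y) <= X + Y.
Proof. intros; eapply Rle_trans; [apply Rabs_triang|]. rewrite Rabs_Ropp; lra. Qed.
Lemma ab_pow x X n : Rabs x <= X -> Rabs (x ^ n) <= X ^ n.
Proof. intros; rewrite <- RPow_abs; apply pow_incr; split; auto using Rabs_pos. Qed.
Lemma ab_pos c : 0 <= c -> Rabs c <= c.
Proof. intros; rewrite Rabs_pos_eq; lra. Qed.
Lemma ab_neg c : c <= 0 -> Rabs c <= - c.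
Proof. intros; rewrite Rabs_left1; lra. Qed.

Ltac bnd := first [ eassumption | apply ab_pos; lra | apply ab_neg; lra
  | eapply ab_mult; [bnd|bnd] | eapply ab_plus; [bnd|bnd] | eapply ab_minus; [bnd|bnd]
  | eapply ab_pow; bnd ].

Lemma Bp_bound S C T Th U : Rabs S <= 1 -> Rabs C <= 1 -> Rabs T <= 1 -> Rabs Th <= 3 * U -> 1 <= U ->
  Rabs (Bp S C T Th U) <= 1000 * U ^ 4.
Proof.
  intros HS HC HT HTh HU. assert (HU' : Rabs U <= U) by (rewrite Rabs_pos_eq; lra).
  unfold Bp. eapply Rle_trans; [bnd|].
  assert (U <= U^2) by nra. assert (U^2 <= U^3) by nra. assert (U^3 <= U^4) by nra.
  ring_simplify. lra.
Qed.

Lemma dBp_bound S C T Th U : Rabs S <= 1 -> Rabs C <= 1 -> Rabs T <= 1 -> Rabs Th <= 3 * U -> 1 <= U ->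
  Rabs (U^2 * Bp S C T Th U + dBp S C T Th U) <= 1000 * U ^ 4.
Proof.
  intros HS HC HT HTh HU. assert (HU' : Rabs U <= U) by (rewrite Rabs_pos_eq; lra).
  unfold Bp, dBp. eapply Rle_trans; [bnd|].
  assert (U <= U^2) by nra. assert (U^2 <= U^3) by nra. assert (U^3 <= U^4) by nra.
  ring_simplify. lra.
Qed.

Definition Bf c s := Bp (sin (/ (sqrt s - 1) + c)) (cos (/ (sqrt s - 1) + c)) (/ sqrt s) (/ (sqrt s - 1)) (/ (s - 1)).
Definition dBf c s := dBp (sin (/ (sqrt s - 1) + c)) (cos (/ (sqrt s - 1) + c)) (/ sqrt s) (/ (sqrt s - 1)) (/ (s - 1)).

Definition pp c s := if Rlt_dec 1 s then exp (- / (s - 1)) * sin (/ (sqrt s - 1) + c) * / sqrt s else 0.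
Definition pp1 c s := if Rlt_dec 1 s then exp (- / (s - 1)) * Bf c s else 0.
Definition pp2 c s := if Rlt_dec 1 s then exp (- / (s - 1)) * ((/ (s - 1)) ^ 2 * Bf c s + dBf c s) else 0.

Lemma sqrt_gt1 s : 1 < s -> 1 < sqrt s.
Proof. intros; rewrite <- sqrt_1; apply sqrt_lt_1_alt; lra. Qed.

Lemma near1 s : 1 < s < 2 ->
  1 <= / (s - 1) /\ Rabs (/ sqrt s) <= 1 /\ Rabs (/ (sqrt s - 1)) <= 3 * / (s - 1).
Proof.
  intros Hs. pose proof (sqrt_gt1 s ltac:(lra)) as Ht.
  assert (Ht2 : sqrt s < 2).
  { replace 2 with (sqrt 4). apply sqrt_lt_1_alt; lra.
    replace 4 with (2 * 2) by ring. rewrite sqrt_square; lra. }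
  assert (Hsq : sqrt s * sqrt s = s) by (apply sqrt_sqrt; lra).
  repeat split.
  - rewrite <- Rinv_1. apply Rinv_le_contravar; lra.
  - rewrite Rabs_pos_eq by (left; apply Rinv_0_lt_compat; lra).
    rewrite <- Rinv_1. apply Rinv_le_contravar; lra.
  - rewrite Rabs_pos_eq by (left; apply Rinv_0_lt_compat; lra).
    replace (/ (sqrt s - 1)) with ((sqrt s + 1) * / (s - 1)).
    + apply Rmult_le_compat_r; [left; apply Rinv_0_lt_compat|]; lra.
    + replace (s - 1) with ((sqrt s - 1) * (sqrt s + 1)) by nra. field. lra.
Qed.

Lemma d0 c s : 1 < s -> is_derive (fun s => exp (- / (s - 1)) * sin (/ (sqrt s - 1) + c) * / sqrt s) s
   (exp (- / (s-1)) * Bf c s).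
Proof.
intros Hs. pose proof (sqrt_gt1 s Hs) as Ht.
auto_derive.
- repeat split; lra.
- unfold Bf, Bp; unfold Rminus; field; repeat split; lra.
Qed.

Lemma d1 c s : 1 < s -> is_derive (fun s => exp (- / (s - 1)) * Bf c s) s
   (exp (- / (s-1)) * ((/ (s-1))^2 * Bf c s + dBf c s)).
Proof.
intros Hs. pose proof (sqrt_gt1 s Hs) as Ht.
unfold Bf, Bp.
auto_derive.
- repeat split; lra.
- unfold dBf, dBp, Bp; unfold Rminus; field; repeat split; lra.
Qed.

Lemma d2 c s : 1 < s -> ex_derive (fun s => exp (- / (s-1)) * ((/ (s-1))^2 * Bf c s + dBf c s)) s.
Proof.
intros Hs. pose proof (sqrt_gt1 s Hs) as Ht.
unfold Bf, Bp, dBf, dBp.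
auto_derive. repeat split; lra.
Qed.

Lemma loc_gt s : 1 < s -> locally s (fun y => 1 < y).
Proof. intros H; exact (open_gt 1 s H). Qed.
Lemma loc_lt s : s < 1 -> locally s (fun y => y < 1).
Proof. intros H; exact (open_lt 1 s H). Qed.

Lemma is_derive_zero_loc (f : R -> R) s : locally s (fun y => f y = 0) -> is_derive f s 0.
Proof.
  intros H. apply (is_derive_ext_loc (fun _ => 0)).
  - eapply filter_imp; [|exact H]. intros y Hy; simpl; rewrite Hy; reflexivity.
  - apply (is_derive_const (K:=R_AbsRing) (V:=R_NormedModule) 0 s).
Qed.

Lemma pp_bounds c s : 1 < s < 2 ->
  Rabs (exp (- / (s - 1)) * sin (/ (sqrt s - 1) + c) * / sqrt s) <= 4 * (s - 1) ^ 2 /\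
  Rabs (exp (- / (s - 1)) * Bf c s) <= 3125000 * Rabs (s - 1) /\
  Rabs (exp (- / (s - 1)) * ((/ (s - 1)) ^ 2 * Bf c s + dBf c s)) <= 256000.
Proof.
  intros Hs. destruct (near1 s Hs) as [HU [HT HTh]].
  destruct (Ebound (s - 1) ltac:(lra)) as [E1 [E2 E3]].
  pose proof (exp_pos (- / (s - 1))) as Ep.
  pose proof (SIN_bound (/ (sqrt s - 1) + c)) as HS.
  pose proof (COS_bound (/ (sqrt s - 1) + c)) as HC.
  assert (HS' : Rabs (sin (/ (sqrt s - 1) + c)) <= 1) by (apply Rabs_le; lra).
  assert (HC' : Rabs (cos (/ (sqrt s - 1) + c)) <= 1) by (apply Rabs_le; lra).
  repeat split.
  - rewrite !Rabs_mult, (Rabs_pos_eq (exp _)) by lra.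
    assert (0 <= Rabs (sin (/ (sqrt s - 1) + c)) * Rabs (/ sqrt s) <= 1).
    { split; [apply Rmult_le_pos; apply Rabs_pos|].
      pose proof (Rabs_pos (sin (/ (sqrt s - 1) + c))); pose proof (Rabs_pos (/ sqrt s)); nra. }
    nra.
  - rewrite Rabs_mult, (Rabs_pos_eq (exp _)) by lra.
    rewrite (Rabs_pos_eq (s - 1)) by lra.
    pose proof (Bp_bound _ _ _ _ _ HS' HC' HT HTh HU) as HB. unfold Bf.
    apply Rle_trans with (exp (- / (s - 1)) * (1000 * (/ (s - 1)) ^ 4)).
    + apply Rmult_le_compat_l; lra.
    + nra.
  - rewrite Rabs_mult, (Rabs_pos_eq (exp _)) by lra.
    pose proof (dBp_bound _ _ _ _ _ HS' HC' HT HTh HU) as HB. unfold Bf, dBf.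
    apply Rle_trans with (exp (- / (s - 1)) * (1000 * (/ (s - 1)) ^ 4)).
    + apply Rmult_le_compat_l; lra.
    + nra.
Qed.

Lemma pp_d c s : is_derive (pp c) s (pp1 c s).
Proof.
  destruct (Rlt_dec 1 s) as [H|H].
  - unfold pp1. destruct (Rlt_dec 1 s) as [_|]; [|lra].
    eapply is_derive_ext_loc; [|apply d0; exact H].
    eapply filter_imp; [|apply loc_gt; exact H]. intros y Hy. simpl.
    unfold pp. destruct (Rlt_dec 1 y); [reflexivity|lra].
  - destruct (Rlt_dec s 1) as [H'|H'].
    + unfold pp1. destruct (Rlt_dec 1 s); [lra|].
      apply is_derive_zero_loc. eapply filter_imp; [|apply loc_lt; exact H'].
      intros y Hy; unfold pp; destruct (Rlt_dec 1 y); [lra|reflexivity].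
    + assert (s = 1) by lra. subst s.
      unfold pp1. destruct (Rlt_dec 1 1); [lra|].
      apply (deriv_flat _ 4 1); try lra.
      * unfold pp; destruct (Rlt_dec 1 1); [lra|reflexivity].
      * intros s Hs. apply Rabs_lt_between' in Hs. unfold pp. destruct (Rlt_dec 1 s).
        -- apply (pp_bounds c s). lra.
        -- rewrite Rabs_R0. nra.
Qed.

Lemma pp1_d c s : s <> 1 -> is_derive (pp1 c) s (pp2 c s).
Proof.
  intros Hs1.
  destruct (Rlt_dec 1 s) as [H|H].
  - unfold pp2. destruct (Rlt_dec 1 s) as [_|]; [|lra].
    eapply is_derive_ext_loc; [|apply d1; exact H].
    eapply filter_imp; [|apply loc_gt; exact H]. intros y Hy. simpl.
    unfold pp1. destruct (Rlt_dec 1 y); [reflexivity|lra].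
  - assert (H' : s < 1) by lra.
    unfold pp2. destruct (Rlt_dec 1 s); [lra|].
    apply is_derive_zero_loc. eapply filter_imp; [|apply loc_lt; exact H'].
    intros y Hy; unfold pp1; destruct (Rlt_dec 1 y); [lra|reflexivity].
Qed.

Lemma pp2_c c s : s <> 1 -> continuity_pt (pp2 c) s.
Proof.
  intros Hs1.
  destruct (Rlt_dec 1 s) as [H|H].
  - destruct (d2 c s H) as [l Hl]. apply (derive_cont _ _ l).
    eapply is_derive_ext_loc; [|exact Hl].
    eapply filter_imp; [|apply loc_gt; exact H]. intros y Hy. simpl.
    unfold pp2. destruct (Rlt_dec 1 y); [reflexivity|lra].
  - assert (H' : s < 1) by lra. apply (derive_cont _ _ 0).
    apply is_derive_zero_loc. eapply filter_imp; [|apply loc_lt; exact H'].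
    intros y Hy; unfold pp2; destruct (Rlt_dec 1 y); [lra|reflexivity].
Qed.

Lemma pp1_c1 c : continuity_pt (pp1 c) 1.
Proof.
  apply (cont_flat _ 3125000 1); try lra.
  - unfold pp1; destruct (Rlt_dec 1 1); [lra|reflexivity].
  - intros s Hs. apply Rabs_lt_between' in Hs. unfold pp1. destruct (Rlt_dec 1 s).
    + apply (pp_bounds c s). lra.
    + rewrite Rabs_R0. pose proof (Rabs_pos (s - 1)). nra.
Qed.

Lemma pp_LL c : LL1 (pp c).
Proof.
  apply (Lip1D _ (pp1 c) 3125000).
  - intros s _; apply pp_d.
  - intros s Hs. apply (derive_cont _ _ (pp2 c s)). apply pp1_d; auto.
  - apply (derive_cont _ _ (pp1 c 1)). apply pp_d.
  - intros s Hs. pose proof Hs as Hs'. apply Rabs_lt_between' in Hs'. unfold pp1. destruct (Rlt_dec 1 s).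
    + eapply Rle_trans; [apply (pp_bounds c s); lra|].
      pose proof (Rabs_pos (s - 1)). nra.
    + rewrite Rabs_R0. lra.
Qed.

Lemma pp1_LL c : LL1 (pp1 c).
Proof.
  apply (Lip1D _ (pp2 c) 256000).
  - intros s Hs; apply pp1_d; auto.
  - intros s Hs. apply pp2_c; auto.
  - apply pp1_c1.
  - intros s Hs. pose proof Hs as Hs'. apply Rabs_lt_between' in Hs'. unfold pp2. destruct (Rlt_dec 1 s).
    + apply (pp_bounds c s); lra.
    + rewrite Rabs_R0. lra.
Qed.

Definition aa s := if Rlt_dec s 1 then exp (/ (s - 1)) else 0.
Definition aa1 s := if Rlt_dec s 1 then exp (/ (s - 1)) * (- (/ (s - 1)) ^ 2) else 0.
Definition aa2 s := if Rlt_dec s 1 then exp (/ (s - 1)) * ((/ (s - 1)) ^ 4 + 2 * (/ (s - 1)) ^ 3) else 0.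

Lemma aa_bounds s : 0 < s < 1 ->
  Rabs (exp (/ (s - 1))) <= 4 * (s - 1) ^ 2 /\
  Rabs (exp (/ (s - 1)) * (- (/ (s - 1)) ^ 2)) <= 3125 * Rabs (s - 1) /\
  Rabs (exp (/ (s - 1)) * ((/ (s - 1)) ^ 4 + 2 * (/ (s - 1)) ^ 3)) <= 768.
Proof.
  intros Hs.
  assert (Hv : / (s - 1) = - / (1 - s)).
  { rewrite <- Rinv_opp. f_equal. ring. }
  rewrite Hv. 
  destruct (Ebound (1 - s) ltac:(lra)) as [E1 [E2 E3]].
  pose proof (exp_pos (- / (1 - s))) as Ep.
  assert (HV : 1 <= / (1 - s)) by (rewrite <- Rinv_1; apply Rinv_le_contravar; lra).
  set (V := / (1 - s)) in *. set (E := exp (- V)) in *.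
  assert (V <= V^2) by nra. assert (V^2 <= V^3) by nra. assert (V^3 <= V^4) by nra.
  rewrite (Rabs_left1 (s - 1)) by lra.
  repeat split.
  - rewrite Rabs_pos_eq by lra. replace ((s - 1) ^ 2) with ((1 - s) ^ 2) by ring. lra.
  - rewrite Rabs_mult, Rabs_pos_eq by lra.
    replace ((- - V) ^ 2) with (V ^ 2) by ring. rewrite Rabs_Ropp, Rabs_pos_eq by nra.
    assert (E * V^2 <= E * V^4) by (apply Rmult_le_compat_l; lra). lra.
  - rewrite Rabs_mult, Rabs_pos_eq by lra.
    replace ((- V) ^ 4 + 2 * (- V) ^ 3) with (V ^ 4 - 2 * V ^ 3) by ring.
    assert (Rabs (V ^ 4 - 2 * V ^ 3) <= 3 * V ^ 4) by (apply Rabs_le; nra).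
    assert (E * Rabs (V ^ 4 - 2 * V ^ 3) <= E * (3 * V^4)) by (apply Rmult_le_compat_l; lra).
    lra.
Qed.

Lemma a1 s : s < 1 -> is_derive (fun s => exp (/ (s - 1))) s (exp (/ (s - 1)) * (- (/ (s - 1)) ^ 2)).
Proof. intros Hs. auto_derive; [lra|]. unfold Rminus; field; lra. Qed.
Lemma a2 s : s < 1 -> is_derive (fun s => exp (/ (s - 1)) * (- (/ (s - 1)) ^ 2)) s
  (exp (/ (s - 1)) * ((/ (s - 1)) ^ 4 + 2 * (/ (s - 1)) ^ 3)).
Proof. intros Hs. auto_derive; [lra|]. unfold Rminus; field; lra. Qed.
Lemma a3 s : s < 1 -> ex_derive (fun s => exp (/ (s - 1)) * ((/ (s - 1)) ^ 4 + 2 * (/ (s - 1)) ^ 3)) s.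
Proof. intros Hs. auto_derive. lra. Qed.

Lemma aa_d s : is_derive aa s (aa1 s).
Proof.
  destruct (Rlt_dec s 1) as [H|H].
  - unfold aa1. destruct (Rlt_dec s 1) as [_|]; [|lra].
    eapply is_derive_ext_loc; [|apply a1; exact H].
    eapply filter_imp; [|apply loc_lt; exact H]. intros y Hy. simpl.
    unfold aa. destruct (Rlt_dec y 1); [reflexivity|lra].
  - destruct (Rlt_dec 1 s) as [H'|H'].
    + unfold aa1. destruct (Rlt_dec s 1); [lra|].
      apply is_derive_zero_loc. eapply filter_imp; [|apply loc_gt; exact H'].
      intros y Hy; unfold aa; destruct (Rlt_dec y 1); [lra|reflexivity].
    + assert (s = 1) by lra. subst s.
      unfold aa1. destruct (Rlt_dec 1 1); [lra|].
      apply (deriv_flat _ 4 1); try lra.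
      * unfold aa; destruct (Rlt_dec 1 1); [lra|reflexivity].
      * intros s Hs. apply Rabs_lt_between' in Hs. unfold aa. destruct (Rlt_dec s 1).
        -- apply (aa_bounds s). lra.
        -- rewrite Rabs_R0. nra.
Qed.

Lemma aa1_d s : s <> 1 -> is_derive aa1 s (aa2 s).
Proof.
  intros Hs1.
  destruct (Rlt_dec s 1) as [H|H].
  - unfold aa2. destruct (Rlt_dec s 1) as [_|]; [|lra].
    eapply is_derive_ext_loc; [|apply a2; exact H].
    eapply filter_imp; [|apply loc_lt; exact H]. intros y Hy. simpl.
    unfold aa1. destruct (Rlt_dec y 1); [reflexivity|lra].
  - assert (H' : 1 < s) by lra.
    unfold aa2. destruct (Rlt_dec s 1); [lra|].
    apply is_derive_zero_loc. eapply filter_imp; [|apply loc_gt; exact H'].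
    intros y Hy; unfold aa1; destruct (Rlt_dec y 1); [lra|reflexivity].
Qed.

Lemma aa2_c s : s <> 1 -> continuity_pt aa2 s.
Proof.
  intros Hs1.
  destruct (Rlt_dec s 1) as [H|H].
  - destruct (a3 s H) as [l Hl]. apply (derive_cont _ _ l).
    eapply is_derive_ext_loc; [|exact Hl].
    eapply filter_imp; [|apply loc_lt; exact H]. intros y Hy. simpl.
    unfold aa2. destruct (Rlt_dec y 1); [reflexivity|lra].
  - assert (H' : 1 < s) by lra. apply (derive_cont _ _ 0).
    apply is_derive_zero_loc. eapply filter_imp; [|apply loc_gt; exact H'].
    intros y Hy; unfold aa2; destruct (Rlt_dec y 1); [lra|reflexivity].
Qed.

Lemma aa1_LL : LL1 aa1.
Proof.
  apply (Lip1D _ aa2 768).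
  - intros s Hs; apply aa1_d; auto.
  - intros s Hs. apply aa2_c; auto.
  - apply (cont_flat _ 3125 1); try lra.
    + unfold aa1; destruct (Rlt_dec 1 1); [lra|reflexivity].
    + intros s Hs. apply Rabs_lt_between' in Hs. unfold aa1. destruct (Rlt_dec s 1).
      * apply (aa_bounds s). lra.
      * rewrite Rabs_R0. pose proof (Rabs_pos (s - 1)). nra.
  - intros s Hs. pose proof Hs as Hs'. apply Rabs_lt_between' in Hs'. unfold aa2. destruct (Rlt_dec s 1).
    + apply (aa_bounds s); lra.
    + rewrite Rabs_R0. lra.
Qed.

Definition sx (x : R * R) : R := fst x * fst x + snd x * snd x.
Definition Frep (x : R * R) : R := aa (sx x) - pp 0 (sx x) * fst x + pp (PI/2) (sx x) * snd x.

Lemma sx_ge0 x : 0 <= sx x.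
Proof. unfold sx; nra. Qed.

Lemma F_eq x : F x = Frep x.
Proof.
  unfold F, Frep, norm2.
  replace (fst x ^ 2 + snd x ^ 2) with (sx x) by (unfold sx; ring).
  pose proof (sx_ge0 x) as H0. set (s := sx x) in *.
  pose proof (sqrt_pos s) as Ht. pose proof (sqrt_sqrt s H0) as Hss.
  destruct (Rlt_dec (sqrt s) 1) as [H1|H1].
  - assert (s < 1) by nra.
    unfold aa, pp. destruct (Rlt_dec s 1); [|lra]. destruct (Rlt_dec 1 s); [lra|].
    rewrite pow2_sqrt by lra. unfold Rdiv. rewrite Rmult_1_l. ring.
  - destruct (Rlt_dec 1 (sqrt s)) as [H2|H2].
    + assert (1 < s) by nra.
      unfold aa, pp. destruct (Rlt_dec s 1); [lra|]. destruct (Rlt_dec 1 s); [|lra].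
      rewrite pow2_sqrt by lra. rewrite Rplus_0_r, (Rplus_comm _ (PI/2)), <- cos_sin.
      replace (-1 / (s - 1)) with (- / (s - 1)) by (field; lra).
      replace (1 / (sqrt s - 1)) with (/ (sqrt s - 1)) by (unfold Rdiv; ring).
      field. lra.
    + assert (s = 1) by nra.
      unfold aa, pp. destruct (Rlt_dec s 1); [lra|]. destruct (Rlt_dec 1 s); [lra|]. ring.
Qed.

Lemma pp_small c s a : a * a <= s -> Rabs (pp c s * a) <= 1.
Proof.
  intros Ha. unfold pp. destruct (Rlt_dec 1 s) as [H|H].
  - pose proof (sqrt_gt1 s H) as Ht.
    assert (HE : exp (- / (s - 1)) <= 1).
    { assert (0 < / (s - 1)) by (apply Rinv_0_lt_compat; lra).
      assert (exp (- / (s - 1)) < exp 0) by (apply exp_increasing; lra). rewrite exp_0 in *; lra. }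
    pose proof (exp_pos (- / (s - 1))).
    assert (Hsin : Rabs (sin (/ (sqrt s - 1) + c)) <= 1) by (apply Rabs_le; apply SIN_bound).
    assert (Haa : Rabs a <= sqrt s).
    { rewrite <- sqrt_Rsqr_abs. apply sqrt_le_1_alt. unfold Rsqr; lra. }
    rewrite !Rabs_mult, (Rabs_pos_eq (exp _)) by lra.
    rewrite (Rabs_pos_eq (/ sqrt s)) by (left; apply Rinv_0_lt_compat; lra).
    assert (Hq : / sqrt s * Rabs a <= 1).
    { apply (Rmult_le_reg_l (sqrt s)); [lra|]. field_simplify; lra. }
    pose proof (Rabs_pos (sin (/ (sqrt s - 1) + c))).
    pose proof (Rabs_pos a).
    assert (0 <= / sqrt s) by (left; apply Rinv_0_lt_compat; lra).
    replace (exp (- / (s - 1)) * Rabs (sin (/ (sqrt s - 1) + c)) * / sqrt s * Rabs a)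
      with ((exp (- / (s - 1)) * Rabs (sin (/ (sqrt s - 1) + c))) * (/ sqrt s * Rabs a)) by ring.
    apply Rle_trans with (1 * 1); [apply Rmult_le_compat; nra | lra].
  - rewrite Rmult_0_l, Rabs_R0; lra.
Qed.

Lemma F_lower : exists m : R, forall x : R * R, m <= F x.
Proof.
  exists (-2). intros x. rewrite F_eq. unfold Frep.
  assert (Ha : 0 <= aa (sx x)).
  { unfold aa. destruct (Rlt_dec (sx x) 1); [left; apply exp_pos|lra]. }
  pose proof (pp_small 0 (sx x) (fst x) ltac:(unfold sx; nra)) as H1.
  pose proof (pp_small (PI/2) (sx x) (snd x) ltac:(unfold sx; nra)) as H2.
  apply Rabs_le_between in H1. apply Rabs_le_between in H2. lra.
Qed.

Lemma fd_fst (x : R*R) : filterdiff (fun y : R*R => fst y) (locally x) (fun y => fst y).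
Proof. apply filterdiff_linear, is_linear_fst. Qed.
Lemma fd_snd (x : R*R) : filterdiff (fun y : R*R => snd y) (locally x) (fun y => snd y).
Proof. apply filterdiff_linear, is_linear_snd. Qed.

Lemma fd_mult (f g : R*R -> R) x lf lg : filterdiff f (locally x) lf -> filterdiff g (locally x) lg ->
  filterdiff (fun y => f y * g y) (locally x) (fun y => lf y * g x + f x * lg y).
Proof. intros Hf Hg. exact (filterdiff_mult_fct (K:=R_AbsRing) f g x lf lg Rmult_comm Hf Hg). Qed.

Lemma fd_plus (f g : R*R -> R) x lf lg : filterdiff f (locally x) lf -> filterdiff g (locally x) lg ->
  filterdiff (fun y => f y + g y) (locally x) (fun y => lf y + lg y).
Proof. intros Hf Hg. exact (filterdiff_plus_fct (K:=R_AbsRing) f g lf lg Hf Hg). Qed.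

Lemma fd_minus (f g : R*R -> R) x lf lg : filterdiff f (locally x) lf -> filterdiff g (locally x) lg ->
  filterdiff (fun y => f y - g y) (locally x) (fun y => lf y - lg y).
Proof. intros Hf Hg. exact (filterdiff_minus_fct (K:=R_AbsRing) f g lf lg Hf Hg). Qed.

Lemma fd_comp (f : R*R -> R) (g : R -> R) x lf l : filterdiff f (locally x) lf -> is_derive g (f x) l ->
  filterdiff (fun y => g (f y)) (locally x) (fun y => lf y * l).
Proof. intros Hf Hg. exact (filterdiff_comp' f g x lf (fun y => scal y l) Hf Hg). Qed.

Lemma fd_sx x : filterdiff sx (locally x) (fun y => 2 * fst x * fst y + 2 * snd x * snd y).
Proof.
  eapply filterdiff_ext_lin.
  apply fd_plus; apply fd_mult; (apply fd_fst || apply fd_snd).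
  intros y; simpl; ring.
Qed.

Definition grad (x : R * R) : R * R :=
  (aa1 (sx x) * (2 * fst x) - (pp1 0 (sx x) * (2 * fst x) * fst x + pp 0 (sx x))
     + pp1 (PI/2) (sx x) * (2 * fst x) * snd x,
   aa1 (sx x) * (2 * snd x) - pp1 0 (sx x) * (2 * snd x) * fst x
     + (pp1 (PI/2) (sx x) * (2 * snd x) * snd x + pp (PI/2) (sx x))).

Lemma F_diff x : filterdiff F (locally x) (dotl (grad x)).
Proof.
  apply (filterdiff_ext Frep F). { intros y; symmetry; apply F_eq. }
  unfold Frep.
  eapply filterdiff_ext_lin.
  - apply fd_plus; [apply fd_minus|].
    + apply fd_comp; [apply fd_sx| apply aa_d].
    + apply fd_mult; [apply fd_comp; [apply fd_sx|apply pp_d] | apply fd_fst].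
    + apply fd_mult; [apply fd_comp; [apply fd_sx|apply pp_d] | apply fd_snd].
  - intros y. unfold dotl, grad. simpl. ring.
Qed.

Definition LL2 (f : R * R -> R) := forall x, exists r, 0 < r /\ exists L,
  forall y z, dist2 y x < r -> dist2 z x < r -> Rabs (f y - f z) <= L * dist2 y z.

Lemma dist2_fst y z : Rabs (fst y - fst z) <= dist2 y z.
Proof.
  unfold dist2, norm2; simpl. rewrite <- sqrt_Rsqr_abs. apply sqrt_le_1_alt.
  pose proof (Rle_0_sqr (snd y - snd z)). unfold Rsqr in *. lra.
Qed.
Lemma dist2_snd y z : Rabs (snd y - snd z) <= dist2 y z.
Proof.
  unfold dist2, norm2; simpl. rewrite <- sqrt_Rsqr_abs. apply sqrt_le_1_alt.
  pose proof (Rle_0_sqr (fst y - fst z)). unfold Rsqr in *. lra.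
Qed.
Lemma dist2_pos y z : 0 <= dist2 y z.
Proof. unfold dist2, norm2; apply sqrt_pos. Qed.
Lemma dist2_refl y : dist2 y y = 0.
Proof. unfold dist2, norm2. cbn [fst snd]. replace ((fst y - fst y) ^ 2 + (snd y - snd y) ^ 2) with 0 by ring. apply sqrt_0. Qed.

Lemma LL2_bounded f : LL2 f -> forall x, exists r, 0 < r /\ exists L, exists M,
  (forall y z, dist2 y x < r -> dist2 z x < r -> Rabs (f y - f z) <= L * dist2 y z) /\
  0 <= L /\ (forall y, dist2 y x < r -> Rabs (f y) <= M).
Proof.
  intros Hf x. destruct (Hf x) as [r [Hr [L HL]]].
  exists r; split; auto. exists (Rabs L), (Rabs (f x) + Rabs L * r). split; [|split].
  - intros y z Hy Hz. eapply Rle_trans; [apply HL; auto|].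
    apply Rmult_le_compat_r; [apply dist2_pos|apply Rle_abs].
  - apply Rabs_pos.
  - intros y Hy. assert (Hx : dist2 x x < r) by (rewrite dist2_refl; lra).
    specialize (HL y x Hy Hx).
    pose proof (Rabs_triang_inv (f y) (f x)).
    assert (L * dist2 y x <= Rabs L * r).
    { apply Rle_trans with (Rabs L * dist2 y x).
      - apply Rmult_le_compat_r; [apply dist2_pos|apply Rle_abs].
      - apply Rmult_le_compat_l; [apply Rabs_pos|lra]. }
    lra.
Qed.

Lemma LL2_const c : LL2 (fun _ => c).
Proof. intros x. exists 1; split; [lra|]. exists 0. intros y z _ _.
  rewrite Rminus_eq_0, Rabs_R0. lra. Qed.
Lemma LL2_fst : LL2 (fun y => fst y).
Proof. intros x. exists 1; split; [lra|]. exists 1. intros y z _ _. rewrite Rmult_1_l; apply dist2_fst. Qed.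
Lemma LL2_snd : LL2 (fun y => snd y).
Proof. intros x. exists 1; split; [lra|]. exists 1. intros y z _ _. rewrite Rmult_1_l; apply dist2_snd. Qed.

Lemma LL2_plus f g : LL2 f -> LL2 g -> LL2 (fun y => f y + g y).
Proof.
  intros Hf Hg x. destruct (Hf x) as [r1 [Hr1 [L1 H1]]]. destruct (Hg x) as [r2 [Hr2 [L2 H2]]].
  exists (Rmin r1 r2). split; [apply Rmin_glb_lt; auto|]. exists (L1 + L2). intros y z Hy Hz.
  pose proof (Rmin_l r1 r2); pose proof (Rmin_r r1 r2).
  specialize (H1 y z ltac:(lra) ltac:(lra)). specialize (H2 y z ltac:(lra) ltac:(lra)).
  replace (f y + g y - (f z + g z)) with ((f y - f z) + (g y - g z)) by ring.
  eapply Rle_trans; [apply Rabs_triang|]. lra.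
Qed.

Lemma LL2_minus f g : LL2 f -> LL2 g -> LL2 (fun y => f y - g y).
Proof.
  intros Hf Hg x. destruct (Hf x) as [r1 [Hr1 [L1 H1]]]. destruct (Hg x) as [r2 [Hr2 [L2 H2]]].
  exists (Rmin r1 r2). split; [apply Rmin_glb_lt; auto|]. exists (L1 + L2). intros y z Hy Hz.
  pose proof (Rmin_l r1 r2); pose proof (Rmin_r r1 r2).
  specialize (H1 y z ltac:(lra) ltac:(lra)). specialize (H2 y z ltac:(lra) ltac:(lra)).
  replace (f y - g y - (f z - g z)) with ((f y - f z) - (g y - g z)) by ring.
  eapply Rle_trans; [apply Rabs_triang|]. rewrite Rabs_Ropp. lra.
Qed.

Lemma LL2_mult f g : LL2 f -> LL2 g -> LL2 (fun y => f y * g y).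
Proof.
  intros Hf Hg x.
  destruct (LL2_bounded f Hf x) as [r1 [Hr1 [L1 [M1 [H1 [HL1 HM1]]]]]].
  destruct (LL2_bounded g Hg x) as [r2 [Hr2 [L2 [M2 [H2 [HL2 HM2]]]]]].
  exists (Rmin r1 r2). split; [apply Rmin_glb_lt; auto|]. exists (M1 * L2 + M2 * L1). intros y z Hy Hz.
  pose proof (Rmin_l r1 r2); pose proof (Rmin_r r1 r2).
  specialize (H1 y z ltac:(lra) ltac:(lra)). specialize (H2 y z ltac:(lra) ltac:(lra)).
  pose proof (HM1 y ltac:(lra)). pose proof (HM2 z ltac:(lra)).
  replace (f y * g y - f z * g z) with (f y * (g y - g z) + g z * (f y - f z)) by ring.
  eapply Rle_trans; [apply Rabs_triang|]. rewrite !Rabs_mult.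
  pose proof (Rabs_pos (f y)); pose proof (Rabs_pos (g z));
  pose proof (Rabs_pos (g y - g z)); pose proof (Rabs_pos (f y - f z)).
  pose proof (dist2_pos y z).
  assert (Rabs (f y) * Rabs (g y - g z) <= M1 * (L2 * dist2 y z)) by (apply Rmult_le_compat; auto).
  assert (Rabs (g z) * Rabs (f y - f z) <= M2 * (L1 * dist2 y z)) by (apply Rmult_le_compat; auto).
  lra.
Qed.

Lemma LL2_comp (h : R -> R) f : LL1 h -> LL2 f -> LL2 (fun y => h (f y)).
Proof.
  intros Hh Hf x.
  destruct (LL2_bounded f Hf x) as [r1 [Hr1 [L1 [M1 [H1 [HL1 HM1]]]]]].
  destruct (Hh (f x)) as [rh [Hrh [Lh HLh]]].
  assert (Hr : 0 < Rmin r1 (rh / (L1 + 1))).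
  { apply Rmin_glb_lt; auto. apply Rdiv_lt_0_compat; lra. }
  exists (Rmin r1 (rh / (L1 + 1))). split; auto. exists (Rabs Lh * L1). intros y z Hy Hz.
  pose proof (Rmin_l r1 (rh / (L1 + 1))); pose proof (Rmin_r r1 (rh / (L1 + 1))).
  assert (Hx : dist2 x x < r1) by (rewrite dist2_refl; lra).
  assert (Hclose : forall w, dist2 w x < Rmin r1 (rh / (L1 + 1)) -> Rabs (f w - f x) < rh).
  { intros w Hw. specialize (H1 w x ltac:(lra) Hx).
    assert (L1 * dist2 w x <= L1 * (rh / (L1 + 1))) by (apply Rmult_le_compat_l; lra).
    assert (L1 * (rh / (L1 + 1)) < rh).
    { apply (Rmult_lt_reg_r (L1 + 1)); [lra|]. field_simplify; nra. }
    lra. }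
  specialize (HLh (f y) (f z) (Hclose y Hy) (Hclose z Hz)).
  specialize (H1 y z ltac:(lra) ltac:(lra)).
  eapply Rle_trans; [exact HLh|].
  apply Rle_trans with (Rabs Lh * Rabs (f y - f z)).
  - apply Rmult_le_compat_r; [apply Rabs_pos|apply Rle_abs].
  - rewrite Rmult_assoc. apply Rmult_le_compat_l; [apply Rabs_pos|exact H1].
Qed.

Lemma LL2_sx : LL2 sx.
Proof. unfold sx. apply LL2_plus; apply LL2_mult; (apply LL2_fst || apply LL2_snd). Qed.

Lemma sqrt_sum_le a b : sqrt (a ^ 2 + b ^ 2) <= Rabs a + Rabs b.
Proof.
  rewrite <- (sqrt_square (Rabs a + Rabs b)) by (pose proof (Rabs_pos a); pose proof (Rabs_pos b); lra).
  apply sqrt_le_1_alt.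
  pose proof (Rabs_pos a); pose proof (Rabs_pos b).
  rewrite <- (pow2_abs a), <- (pow2_abs b). nra.
Qed.

Lemma grad_LL : locally_lipschitz grad.
Proof.
  assert (G1 : LL2 (fun x => fst (grad x))).
  { unfold grad; simpl.
    apply LL2_plus; [apply LL2_minus|].
    - apply LL2_mult; [apply LL2_comp; [apply aa1_LL|apply LL2_sx]|].
      apply LL2_mult; [apply LL2_const|apply LL2_fst].
    - apply LL2_plus; [|apply LL2_comp; [apply pp_LL|apply LL2_sx]].
      apply LL2_mult; [|apply LL2_fst].
      apply LL2_mult; [apply LL2_comp; [apply pp1_LL|apply LL2_sx]|].
      apply LL2_mult; [apply LL2_const|apply LL2_fst].
    - apply LL2_mult; [|apply LL2_snd].
      apply LL2_mult; [apply LL2_comp; [apply pp1_LL|apply LL2_sx]|].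
      apply LL2_mult; [apply LL2_const|apply LL2_fst]. }
  assert (G2 : LL2 (fun x => snd (grad x))).
  { unfold grad; simpl.
    apply LL2_plus; [apply LL2_minus|].
    - apply LL2_mult; [apply LL2_comp; [apply aa1_LL|apply LL2_sx]|].
      apply LL2_mult; [apply LL2_const|apply LL2_snd].
    - apply LL2_mult; [|apply LL2_fst].
      apply LL2_mult; [apply LL2_comp; [apply pp1_LL|apply LL2_sx]|].
      apply LL2_mult; [apply LL2_const|apply LL2_snd].
    - apply LL2_plus; [|apply LL2_comp; [apply pp_LL|apply LL2_sx]].
      apply LL2_mult; [|apply LL2_snd].
      apply LL2_mult; [apply LL2_comp; [apply pp1_LL|apply LL2_sx]|].
      apply LL2_mult; [apply LL2_const|apply LL2_snd]. }
  intros x. destruct (G1 x) as [r1 [Hr1 [L1 H1]]]. destruct (G2 x) as [r2 [Hr2 [L2 H2]]].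
  exists (Rmin r1 r2). split; [apply Rmin_glb_lt; auto|]. exists (L1 + L2). intros y z Hy Hz.
  pose proof (Rmin_l r1 r2); pose proof (Rmin_r r1 r2).
  specialize (H1 y z ltac:(lra) ltac:(lra)). specialize (H2 y z ltac:(lra) ltac:(lra)).
  cbv beta in H1, H2. unfold dist2 at 1, norm2. cbn [fst snd].
  eapply Rle_trans; [apply sqrt_sum_le|]. lra.
Qed.

Theorem proposition6p1 :
  (exists m : R, forall x : R * R, m <= F x) /\
  (forall x : R * R, ex_filterdiff F (locally x)) /\
  (exists grad : R * R -> R * R,
     (forall x : R * R, filterdiff F (locally x) (dotl (grad x))) /\
     locally_lipschitz grad).
Proof.
  split; [exact F_lower|]. split.
  - intros x. exists (dotl (grad x)). apply F_diff.
  - exists grad. split; [exact F_diff|exact grad_LL].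
Qed.
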